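(* Let $F\colon\mathcal M\to\mathcal N$ be a (symmetric) monoidal functor between (symmetric) monoidal categories. If $\mathcal N$ is purely monoidal, then the set $\Theta(F)$ has at most one element. If in addition $\mathcal M$ is a 2-group, then $\Theta(F)$ has exactly one element.
   Context: Monoidal functors are strong monoidal. For a monoidal functor $F\colon\mathcal M\to\mathcal N$, $\Theta(F)$ denotes the set of monoidal natural isomorphisms $F\Rightarrow \Delta_{I_{\mathcal N}}$, where $\Delta_{I_{\mathcal N}}\colon\mathcal M\to\mathcal N$ is the constant (monoidal) functor at the unit object $I_{\mathcal N}$. An object $A$ of a monoidal category is weakly invertible if there is $B$ with $A\otimes B\cong B\otimes A\cong I$. A 2-group is a monoidal category which is a groupoid and in which every object is weakly invertible. A monoidal category is purely monoidal (pure) if for every pair of weakly invertible objects there is exactly one isomorphism between them. *)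

(* Defs.v *)
Set Implicit Arguments.
Unset Strict Implicit.

Record Category := {
  Ob :> Type;
  Hom : Ob -> Ob -> Type;
  idm : forall A : Ob, Hom A A;
  comp : forall A B C : Ob, Hom B C -> Hom A B -> Hom A C;
  comp_idl : forall (A B : Ob) (f : Hom A B), comp (idm B) f = f;
  comp_idr : forall (A B : Ob) (f : Hom A B), comp f (idm A) = f;
  comp_assoc : forall (A B C D : Ob) (h : Hom C D) (g : Hom B C) (f : Hom A B),
      comp h (comp g f) = comp (comp h g) f
}.
Arguments Hom {c} _ _.
Arguments idm {c} A.
Arguments comp {c A B C} _ _.

Notation "g ∘ f" := (comp g f) (at level 40, left associativity).

Definition is_iso (C : Category) (A B : C) (f : Hom A B) : Prop :=
  exists g : Hom B A, g ∘ f = idm A /\ f ∘ g = idm B.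

Definition isomorphic (C : Category) (A B : C) : Prop :=
  exists f : Hom A B, is_iso f.

Section MonoidalAxioms.
Variable C : Category.
Variable tens : C -> C -> C.
Variable tensm : forall A B A' B' : C, Hom A A' -> Hom B B' -> Hom (tens A B) (tens A' B').
Variable I : C.
Variable alpha : forall A B D : C, Hom (tens (tens A B) D) (tens A (tens B D)).
Variable lam : forall A : C, Hom (tens I A) A.
Variable rho : forall A : C, Hom (tens A I) A.

Definition monoidal_axioms : Prop :=
  (forall A B : C, tensm (idm A) (idm B) = idm (tens A B)) /\
  (forall (A1 A2 A3 B1 B2 B3 : C) (f : Hom A1 A2) (f' : Hom A2 A3)
          (g : Hom B1 B2) (g' : Hom B2 B3),
      tensm (f' ∘ f) (g' ∘ g) = tensm f' g' ∘ tensm f g) /\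
  (forall A B D : C, is_iso (alpha A B D)) /\
  (forall A : C, is_iso (lam A)) /\
  (forall A : C, is_iso (rho A)) /\
  (forall (A A' B B' D D' : C) (f : Hom A A') (g : Hom B B') (h : Hom D D'),
      alpha A' B' D' ∘ tensm (tensm f g) h = tensm f (tensm g h) ∘ alpha A B D) /\
  (forall (A A' : C) (f : Hom A A'), lam A' ∘ tensm (idm I) f = f ∘ lam A) /\
  (forall (A A' : C) (f : Hom A A'), rho A' ∘ tensm f (idm I) = f ∘ rho A) /\
  (forall W X Y Z : C,
      alpha W X (tens Y Z) ∘ alpha (tens W X) Y Z
      = tensm (idm W) (alpha X Y Z) ∘ alpha W (tens X Y) Z
          ∘ tensm (alpha W X Y) (idm Z)) /\
  (forall X Y : C,
      tensm (idm X) (lam Y) ∘ alpha X I Y = tensm (rho X) (idm Y)).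
End MonoidalAxioms.

Record MonoidalCategory := {
  mcat :> Category;
  tens : mcat -> mcat -> mcat;
  tensm : forall A B A' B' : mcat, Hom A A' -> Hom B B' -> Hom (tens A B) (tens A' B');
  munit : mcat;
  massoc : forall A B D : mcat, Hom (tens (tens A B) D) (tens A (tens B D));
  mlunit : forall A : mcat, Hom (tens munit A) A;
  mrunit : forall A : mcat, Hom (tens A munit) A;
  mon_ax : monoidal_axioms tensm massoc mlunit mrunit
}.
Arguments tens {m} _ _.
Arguments tensm {m A B A' B'} _ _.
Arguments munit {m}.
Arguments massoc {m} A B D.
Arguments mlunit {m} A.
Arguments mrunit {m} A.

Notation "A ⊗ B" := (tens A B) (at level 35).
Notation "f ⊗m g" := (tensm f g) (at level 35).

Section FunctorAxioms.
Variables M N : MonoidalCategory.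
Variable F : M -> N.
Variable Fm : forall A B : M, Hom A B -> Hom (F A) (F B).
Variable phi : forall X Y : M, Hom (F X ⊗ F Y) (F (X ⊗ Y)).
Variable phi0 : Hom (@munit N) (F munit).

Definition monoidal_functor_axioms : Prop :=
  (forall A : M, Fm (idm A) = idm (F A)) /\
  (forall (A B D : M) (g : Hom B D) (f : Hom A B), Fm (g ∘ f) = Fm g ∘ Fm f) /\
  (forall X Y : M, is_iso (phi X Y)) /\
  is_iso phi0 /\
  (forall (X X' Y Y' : M) (f : Hom X X') (g : Hom Y Y'),
      phi X' Y' ∘ (Fm f ⊗m Fm g) = Fm (f ⊗m g) ∘ phi X Y) /\
  (forall X Y Z : M,
      Fm (massoc X Y Z) ∘ phi (X ⊗ Y) Z ∘ (phi X Y ⊗m idm (F Z))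
      = phi X (Y ⊗ Z) ∘ (idm (F X) ⊗m phi Y Z) ∘ massoc (F X) (F Y) (F Z)) /\
  (forall X : M,
      Fm (mlunit X) ∘ phi munit X ∘ (phi0 ⊗m idm (F X)) = mlunit (F X)) /\
  (forall X : M,
      Fm (mrunit X) ∘ phi X munit ∘ (idm (F X) ⊗m phi0) = mrunit (F X)).
End FunctorAxioms.

Record MonoidalFunctor (M N : MonoidalCategory) := {
  fob :> M -> N;
  fmor : forall A B : M, Hom A B -> Hom (fob A) (fob B);
  fphi : forall X Y : M, Hom (fob X ⊗ fob Y) (fob (X ⊗ Y));
  fphi0 : Hom (@munit N) (fob munit);
  fun_ax : monoidal_functor_axioms fmor fphi fphi0
}.
Arguments fmor {M N} m {A B} _.
Arguments fphi {M N} m X Y.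
Arguments fphi0 {M N} m.

(** * Theta(F): monoidal natural isomorphisms F => Delta_I.
    The constant functor Delta_I : M -> N sends every object to I_N and
    every morphism to id_{I_N}; its monoidal structure maps are
    lambda_I : I ⊗ I -> I (= rho_I) and id_I : I -> I. *)
Definition in_Theta {M N : MonoidalCategory} (F : MonoidalFunctor M N)
    (theta : forall X : M, Hom (F X) (@munit N)) : Prop :=
  (forall X : M, is_iso (theta X)) /\
  (forall (X Y : M) (f : Hom X Y), theta Y ∘ fmor F f = idm munit ∘ theta X) /\
  (forall X Y : M,
      theta (X ⊗ Y) ∘ fphi F X Y = mlunit munit ∘ (theta X ⊗m theta Y)) /\
  theta munit ∘ fphi0 F = idm munit.

Definition weakly_invertible (M : MonoidalCategory) (A : M) : Prop :=
  exists B : M, isomorphic (A ⊗ B) munit /\ isomorphic (B ⊗ A) munit.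

Definition is_groupoid (C : Category) : Prop :=
  forall (A B : C) (f : Hom A B), is_iso f.

Definition is_2group (M : MonoidalCategory) : Prop :=
  is_groupoid M /\ forall A : M, weakly_invertible A.

Definition purely_monoidal (M : MonoidalCategory) : Prop :=
  forall A B : M, weakly_invertible A -> weakly_invertible B ->
    (exists f : Hom A B, is_iso f) /\
    (forall f g : Hom A B, is_iso f -> is_iso g -> f = g).

Arguments in_Theta {M N} F theta.

(* Main.v *)
Require Import Defs.
From Stdlib Require Import FunctionalExtensionality ClassicalEpsilon.

Lemma iso_comp (C : Category) (A B D : C) (f : Hom A B) (g : Hom B D) :
  is_iso f -> is_iso g -> is_iso (g ∘ f).
Proof.
  intros [f' [H1 H2]] [g' [H3 H4]]. exists (f' ∘ g'). split.
  - rewrite comp_assoc, <- (comp_assoc f' g' g), H3, comp_idr. exact H1.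
  - rewrite comp_assoc, <- (comp_assoc g f f'), H2, comp_idr. exact H4.
Qed.

Lemma iso_id (C : Category) (A : C) : is_iso (idm A).
Proof. exists (idm A). split; apply comp_idl. Qed.

Lemma iso_inv (C : Category) (A B : C) (f : Hom A B) :
  is_iso f -> exists g : Hom B A, is_iso g.
Proof. intros [g [H1 H2]]. exists g. exists f. split; assumption. Qed.

Lemma tensm_iso (M : MonoidalCategory) (A B A' B' : M) (f : Hom A A') (g : Hom B B') :
  is_iso f -> is_iso g -> is_iso (f ⊗m g).
Proof.
  destruct (mon_ax M) as [Hid [Hc _]].
  intros [f' [H1 H2]] [g' [H3 H4]]. exists (f' ⊗m g'). split.
  - rewrite <- Hc, H1, H3. apply Hid.
  - rewrite <- Hc, H2, H4. apply Hid.
Qed.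

Lemma Fm_iso (M N : MonoidalCategory) (F : MonoidalFunctor M N) (A B : M) (f : Hom A B) :
  is_iso f -> is_iso (fmor F f).
Proof.
  destruct (fun_ax F) as [Hid [Hc _]].
  intros [f' [H1 H2]]. exists (fmor F f'). split.
  - rewrite <- Hc, H1. apply Hid.
  - rewrite <- Hc, H2. apply Hid.
Qed.

Lemma unit_wi (N : MonoidalCategory) : weakly_invertible (@munit N).
Proof.
  destruct (mon_ax N) as [_ [_ [_ [Hl _]]]].
  exists munit. split; exists (mlunit munit); apply Hl.
Qed.

Lemma iso_to_unit_wi (N : MonoidalCategory) (A : N) (f : Hom A munit) :
  is_iso f -> weakly_invertible A.
Proof.
  destruct (mon_ax N) as [_ [_ [_ [Hl [Hr _]]]]].
  intros Hf. exists munit. split.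
  - exists (f ∘ mrunit A). apply iso_comp; auto.
  - exists (f ∘ mlunit A). apply iso_comp; auto.
Qed.

Lemma uniq_to_unit (N : MonoidalCategory) (HP : purely_monoidal N) (A : N)
  (f g : Hom A munit) : is_iso f -> is_iso g -> f = g.
Proof.
  intros Hf Hg. destruct (HP A munit (@iso_to_unit_wi N A f Hf) (unit_wi N)) as [_ U].
  apply U; assumption.
Qed.
Arguments uniq_to_unit {N} HP {A} f g _ _.
Arguments iso_inv {C A B} f _.
Arguments Fm_iso {M N} F {A B} f _.
Arguments tensm_iso {M A B A' B'} f g _ _.

Theorem lemma6p1 (M N : MonoidalCategory) (F : MonoidalFunctor M N) :
  purely_monoidal N ->
  (forall theta1 theta2 : forall X : M, Hom (F X) (@munit N),
      in_Theta F theta1 -> in_Theta F theta2 -> theta1 = theta2) /\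
  (is_2group M ->
     exists theta : forall X : M, Hom (F X) (@munit N), in_Theta F theta).
Proof.
  intros HP. split.
  - intros t1 t2 [H1 _] [H2 _]. apply functional_extensionality_dep. intros X.
    apply (uniq_to_unit HP); auto.
  - intros [Hg Hw].
    destruct (fun_ax F) as [_ [_ [Hphi [Hphi0 _]]]].
    destruct (iso_inv _ Hphi0) as [p0 Hp0].
    assert (Ex : forall X : M, {t : Hom (F X) munit | is_iso t}).
    { intros X. apply constructive_indefinite_description.
      assert (WX : weakly_invertible (F X)).
      { destruct (Hw X) as [Y [[u Hu] [v Hv]]]. exists (F Y). split.
        - exists (p0 ∘ (fmor F u ∘ fphi F X Y)).
          apply iso_comp; auto. apply iso_comp; auto. apply (Fm_iso F); auto.
        - exists (p0 ∘ (fmor F v ∘ fphi F Y X)).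
          apply iso_comp; auto. apply iso_comp; auto. apply (Fm_iso F); auto. }
      destruct (HP _ _ WX (unit_wi N)) as [[f Hf] _]. exists f; exact Hf. }
    exists (fun X => proj1_sig (Ex X)).
    destruct (mon_ax N) as [_ [_ [_ [Hl _]]]].
    split; [|split; [|split]].
    + intros X. exact (proj2_sig (Ex X)).
    + intros X Y f. apply (uniq_to_unit HP).
      * apply iso_comp; [apply (Fm_iso F); apply Hg | exact (proj2_sig (Ex Y))].
      * apply iso_comp; [exact (proj2_sig (Ex X)) | apply iso_id].
    + intros X Y. apply (uniq_to_unit HP).
      * apply iso_comp; [apply Hphi | exact (proj2_sig (Ex _))].
      * apply iso_comp; [apply (tensm_iso _ _); [exact (proj2_sig (Ex X)) | exact (proj2_sig (Ex Y))] | apply Hl].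
    + apply (uniq_to_unit HP).
      * apply iso_comp; [exact Hphi0 | exact (proj2_sig (Ex _))].
      * apply iso_id.
Qed.
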